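(* Let $q$ be a prime power, $m\ge2$, $\ell\ge1$, $r_1,\dots,r_m\ge1$, $\ell\le k<m\ell$, and $n=\sum_{i=1}^m(\ell+r_i)$. Let $C_1,\dots,C_m\in\mathbb{F}_q^{k\times\ell}$, $D_i\in\mathbb{F}_q^{k\times r_i}$ for $i<m$ and $D_m'\in\mathbb{F}_q^{k\times(r_m-1)}$ be such that the matrix $(C_1\mid D_1\mid\dots\mid C_{m-1}\mid D_{m-1}\mid C_m\mid D_m')$, with blocks $(C_i\mid D_i)$ for $i<m$ and $(C_m\mid D_m')$, generates an $[n-1,k,\ell;r_1,\dots,r_{m-1},r_m-1]$-PMDS code. Let $y_1,\dots,y_\ell$ be variables and let $$G(y)=(C_1\mid D_1\mid\dots\mid C_m\mid D_m'\mid \textstyle\sum_{t=1}^\ell y_tC_m^{(t)})\in\mathbb{F}_q[y_1,\dots,y_\ell]^{k\times n},$$ where $C_m^{(t)}$ is the $t$-th column of $C_m$, with blocks $(C_i\mid D_i)$ for $i<m$ and $(C_m\mid D_m'\mid\sum_t y_tC_m^{(t)})$ as the $m$-th block. Let $\mathcal T_{k,\ell}(G(y))$ be the set of $k\times k$ submatrices of $G(y)$ with at most $\ell$ columns in each block, and $\tilde p(y)=\mathrm{lcm}\{\det S\mid S\in\mathcal T_{k,\ell}(G(y))\}$. Then the total degree of $\tilde p$ is at most $$M^*:=M(k-1;\ell+r_1,\dots,\ell+r_{m-1},\ell+r_m-1;\ell,\dots,\ell,\ell-1).$$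
   Context: For positive integers $n_1,\dots,n_m$ with $n=\sum_i n_i$, nonnegative integers $f_1,\dots,f_m$ and an integer $k\ge0$, set $N_0=0$, $N_i=\sum_{j\le i}n_j$, $J_i=\{N_{i-1}+1,\dots,N_i\}$ for $i=1,\dots,m$, and let $M(k;n_1,\dots,n_m;f_1,\dots,f_m)$ be the number of subsets $I\subseteq\{1,\dots,n\}$ with $|I|=k$ and $|I\cap J_i|\le f_i$ for all $i$. An $[n,k]$-MDS code is a linear code of length $n$, dimension $k$, minimum Hamming distance $n-k+1$. PMDS codes: for integers $\ell\ge1$, $r_1,\dots,r_m\ge0$, $n=\sum_i(r_i+\ell)$, a linear code $C\subseteq\mathbb{F}^n$ of dimension $k<n$ with generator matrix $G=(B_1\mid\dots\mid B_m)$, $B_i\in\mathbb{F}^{k\times(r_i+\ell)}$, is an $[n,k,\ell;r_1,\dots,r_m]$-PMDS code if (i) each row space of $B_i$ is an $[r_i+\ell,\ell]$-MDS code, and (ii) for any choice of $r_i$ erased coordinates in block $i$ for every $i$, puncturing $C$ at them gives an $[m\ell,k]$-MDS code. *)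

(* Defs.v *)
From HB Require Import structures.
From mathcomp Require Import all_boot all_order all_algebra.
From mathcomp Require Import mpoly.
Set Implicit Arguments. Unset Strict Implicit. Unset Printing Implicit Defensive.
Import Order.TTheory GRing.Theory.
Local Open Scope ring_scope.

Section Codes.
Variable F : fieldType.

Definition wt N (v : 'rV[F]_N) : nat := #|[set j : 'I_N | v 0 j != 0]|.

Definition has_min_dist k N (G : 'M[F]_(k, N)) (d : nat) : Prop :=
  (exists x : 'rV[F]_k, x *m G != 0 /\ wt (x *m G) = d) /\
  (forall x : 'rV[F]_k, x *m G != 0 -> (d <= wt (x *m G))%N).

Definition is_MDS k N (G : 'M[F]_(k, N)) (d : nat) : Prop :=
  \rank G = d /\ has_min_dist G (N - d + 1).

(* Restriction of G to the columns in S (= puncturing at the complement of S),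
   columns kept in increasing order. *)
Definition restrict k N (G : 'M[F]_(k, N)) (S : {set 'I_N}) : 'M[F]_(k, #|S|) :=
  colsub (fun t : 'I_#|S| => @enum_val _ (mem S) t) G.
End Codes.

Definition block_start m (s : 'I_m -> nat) (i : 'I_m) : nat :=
  (\sum_(j < m | (j < i)%N) s j)%N.
Definition block N m (s : 'I_m -> nat) (i : 'I_m) : {set 'I_N} :=
  [set j : 'I_N | (block_start s i <= j < block_start s i + s i)%N].

Arguments block {N m} s i.

Definition is_PMDS (F : fieldType) k n l m (r : 'I_m -> nat) (G : 'M[F]_(k, n)) : Prop :=
  [/\ [/\ (1 <= l)%N, n = (\sum_(i < m) (r i + l))%N, (k < n)%N & \rank G = k],
      (forall i : 'I_m, is_MDS (restrict G (block (fun j => r j + l) i)) l) &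
      (forall E : {set 'I_n},
         (forall i : 'I_m, #|E :&: block (fun j => r j + l) i| = r i) ->
         is_MDS (restrict G (~: E)) k)].

Definition Mcount (k m : nat) (ns fs : 'I_m -> nat) : nat :=
  #|[set I : {set 'I_(\sum_(i < m) ns i)} |
      (#|I| == k) && [forall i : 'I_m, (#|I :&: block ns i| <= fs i)%N]]|.

Definition mdvd n (R : comRingType) (a b : {mpoly R[n]}) : Prop :=
  exists c, b = c * a.
Definition is_lcm n (R : comRingType) (I : Type) (P : I -> Prop)
    (g : I -> {mpoly R[n]}) (p : {mpoly R[n]}) : Prop :=
  (forall i, P i -> mdvd (g i) p) /\
  (forall c, (forall i, P i -> mdvd (g i) c) -> mdvd p c).

(* total degree (0 for the zero polynomial) *)
Definition tdeg n (R : comRingType) (p : {mpoly R[n]}) : nat := (msize p).-1.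

Definition rprime m (r : 'I_m -> nat) (i : 'I_m) : nat :=
  if (i : nat) == m.-1 then (r i).-1 else r i.

Definition G0 (F : fieldType) k l m (r : 'I_m -> nat)
    (C : forall i : 'I_m, 'M[F]_(k, l)) (D : forall i : 'I_m, 'M[F]_(k, rprime r i)) :
    'M[F]_(k, \sum_(i < m) (l + rprime r i)) :=
  \mxrow_(i < m) row_mx (C i) (D i).

(* the new column sum_t y_t C_m^(t), where C_m is C at the last index m-1 *)
Definition newcol (F : fieldType) k l m (C : forall i : 'I_m, 'M[F]_(k, l)) :
    'cV[{mpoly F[l]}]_k :=
  \sum_(i < m | (i : nat) == m.-1) \sum_(t < l)
      'X_t *: map_mx (fun a => a%:MP) (col t (C i)).

Definition Gy (F : fieldType) k l m (r : 'I_m -> nat)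
    (C : forall i : 'I_m, 'M[F]_(k, l)) (D : forall i : 'I_m, 'M[F]_(k, rprime r i)) :
    'M[{mpoly F[l]}]_(k, \sum_(i < m) (l + rprime r i) + 1) :=
  row_mx (map_mx (fun a => a%:MP) (G0 C D)) (newcol C).

(* block sizes of G(y): l + r_i ; an admissible column selection for
   T_{k,l}(G(y)): strictly increasing f : 'I_k -> columns with at most l
   columns in each block. *)
Definition admissible N k l m (r : 'I_m -> nat) (f : 'I_k -> 'I_N) : Prop :=
  {homo f : a b / (a < b)%N} /\
  forall i : 'I_m, (#|[set t : 'I_k | f t \in block (fun j => l + r j) i]| <= l)%N.

(* Main.v *)
Require Import Defs.
From HB Require Import structures.
From mathcomp Require Import all_boot all_order all_algebra all_fingroup.
From mathcomp Require Import mpoly.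
From mathcomp Require Import zify.
Import Order.TTheory GRing.Theory.
Lemma natle_eq (a b : nat) : (a <= b)%N -> (b < a + 1)%N -> b = a.
Proof. lia. Qed.

Section Comb.
Variables (m l k : nat) (r : 'I_m -> nat).
Hypothesis hm : (0 < m)%N.
Hypothesis hr : forall i, (1 <= r i)%N.

Local Notation N0 := (\sum_(i < m) (l + rprime r i))%N.
Local Notation ns := (fun i : 'I_m => l + rprime r i)%N.
Local Notation bs := (fun i : 'I_m => l + r i)%N.

Definition adb (g : {ffun 'I_k -> 'I_(N0 + 1)}) : bool :=
  [forall a : 'I_k, forall b : 'I_k, (a < b)%N ==> (g a < g b)%N] &&
  [forall i : 'I_m, #|[set t : 'I_k | g t \in block bs i]| <= l]%N.

Lemma adb_inj g : adb g -> injective g.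
Proof.
case/andP=> /forallP H _ a b eab.
case: (ltngtP a b) => [hab|hab|/val_inj //].
- by move: (H a) => /forallP /(_ b) /implyP /(_ hab); rewrite eab ltnn.
- by move: (H b) => /forallP /(_ a) /implyP /(_ hab); rewrite eab ltnn.
Qed.

Lemma adb_sorted g : adb g ->
  sorted (relpre val ltn) (codom g).
Proof.
case/andP=> /forallP H _.
have -> : codom g = map g (enum 'I_k) by rewrite codomE.
apply: (@homo_sorted _ _ _ (relpre val ltn)).
  by move=> a b /= hab; move: (H a) => /forallP /(_ b) /implyP /(_ hab).
by rewrite -sorted_map val_enum_ord iota_ltn_sorted.
Qed.

Lemma adb_eq g1 g2 : adb g1 -> adb g2 -> codom g1 =i codom g2 -> g1 = g2.
Proof.
move=> h1 h2 e.
have tr : transitive (relpre (@nat_of_ord (N0 + 1)) ltn).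
  by move=> x y z /= ; apply: ltn_trans.
have ir : irreflexive (relpre (@nat_of_ord (N0 + 1)) ltn).
  by move=> x /=; rewrite ltnn.
have := irr_sorted_eq tr ir (adb_sorted g1 h1) (adb_sorted g2 h2) e.
rewrite !codomE => /eq_in_map E.
by apply/ffunP => t; apply: E; rewrite mem_enum.
Qed.

Definition nmax : 'I_(N0 + 1) := @Ordinal (N0 + 1) N0 (eq_leq (esym (addn1 N0))).

Lemma ilast_lt : (m.-1 < m)%N. Proof. by rewrite ltn_predL. Qed.
Definition ilast : 'I_m := Ordinal ilast_lt.


Lemma start_eq (i : 'I_m) : block_start ns i = block_start bs i.
Proof.
rewrite /block_start; apply: eq_bigr => j hj; congr (_ + _)%N.
rewrite /rprime; case: eqP => // e.
by move: (ltn_ord i) hj; rewrite e; lia.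
Qed.

Lemma B1 (i : 'I_m) (j : 'I_N0) : j \in block ns i -> lshift 1 j \in block bs i.
Proof.
rewrite !inE /= start_eq => /andP[a b]; rewrite a /=.
apply: (leq_trans b); rewrite leq_add2l leq_add2l /rprime.
by case: ifP => // _; apply: leq_pred.
Qed.

Lemma N0_eq : N0 = (block_start bs ilast + l + (r ilast).-1)%N.
Proof.
rewrite (bigD1 ilast) //= addnC -addnA; congr (_ + _)%N; last first.
  by rewrite /rprime eqxx.
rewrite -start_eq /block_start; apply: eq_bigl => j.
rewrite -val_eqE /= ltn_neqAle -ltnS prednK // ltn_ord andbT.
by apply/idP/idP; case: eqP => // ->; rewrite eqxx.
Qed.

Lemma B2 : nmax \in block bs ilast.
Proof.
rewrite inE /=; move: N0_eq (hr ilast).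
move=> e h; rewrite [X in (_ <= X)%N]e [X in (X < _)%N]e; lia.
Qed.

Definition Aset := [set g : {ffun 'I_k -> 'I_(N0 + 1)} | adb g && [exists j, N0 <= g j]%N].
Definition phi (g : {ffun 'I_k -> 'I_(N0 + 1)}) : {set 'I_N0} :=
  [set j : 'I_N0 | lshift 1 j \in codom g].

Lemma small_eq (x : 'I_(N0 + 1)) (hx : (x < N0)%N) : x = lshift 1 (Ordinal hx).
Proof. exact: val_inj. Qed.

Lemma big_eq (x : 'I_(N0 + 1)) : (N0 <= x)%N -> x = nmax.
Proof. by move=> h; apply: val_inj => /=; apply: natle_eq h (ltn_ord x). Qed.

Lemma codom_eq g : g \in Aset -> [set x in codom g] = nmax |: (lshift 1 @: phi g).
Proof.
rewrite inE => /andP[_ /existsP[j0 hj0]].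
apply/setP => x; rewrite !inE; case: (ltnP x N0) => hx.
  rewrite (small_eq x hx) (mem_imset _ _ (@lshift_inj _ _)) inE.
  suff -> : (lshift 1 (Ordinal hx) == nmax) = false by [].
  by apply/negbTE; rewrite -val_eqE /= neq_ltn hx.
rewrite (big_eq x hx) eqxx /=; apply/codomP; exists j0.
by rewrite (big_eq _ hj0).
Qed.

Lemma nmax_notin (S : {set 'I_N0}) : nmax \notin lshift 1 @: S.
Proof.
apply/imsetP => [[j _ e]]; move: (ltn_ord j); rewrite -[X in (_ < X)%N]/(val nmax) e /=.
by rewrite ltnn.
Qed.

Lemma phi_card g : g \in Aset -> #|phi g| = k.-1.
Proof.
move=> gA; have : #|[set x in codom g]| = #|nmax |: (lshift 1 @: phi g)|.
  by rewrite (codom_eq g gA).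
rewrite cardsU1 nmax_notin card_imset; last exact: (@lshift_inj _ _).
rewrite cardsE card_codom ?card_ord; first by move=> ->.
by move: gA; rewrite inE => /andP[/(adb_inj g)].
Qed.

Lemma phi_block g (i : 'I_m) : g \in Aset ->
  (#|phi g :&: block ns i| + ((i : nat) == m.-1) <= l)%N.
Proof.
move=> gA; have := gA; rewrite inE => /andP[/andP[_ /forallP /(_ i) Hi] _].
have HZ : (#|[set x in codom g] :&: block bs i| <= l)%N.
  apply: leq_trans Hi; apply: leq_trans (leq_imset_card g _).
  apply: subset_leq_card; apply/subsetP => x; rewrite !inE => /andP[/codomP[t ->] ht].
  by apply/imsetP; exists t; rewrite ?inE.
have sub1 : lshift 1 @: (phi g :&: block ns i) \subset [set x in codom g] :&: block bs i.
  apply/subsetP => x /imsetP[j]; rewrite inE => /andP[hj hb] ->.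
  rewrite in_setI (B1 i j hb) andbT inE; move: hj; rewrite inE; exact.
have [hi|hi] := eqVneq (i : nat) m.-1.
  have ei : i = ilast by apply: val_inj.
  subst i.
  have sub2 : nmax |: (lshift 1 @: (phi g :&: block ns ilast)) \subset [set x in codom g] :&: block bs ilast.
    rewrite subUset sub1 andbT sub1set in_setI B2 andbT.
    have : nmax \in [set x in codom g] by rewrite (codom_eq g gA) setU11.
    by rewrite inE.
  have := subset_leq_card sub2; rewrite cardsU1 nmax_notin card_imset; last exact: (@lshift_inj _ _).
  by rewrite addnC => h; apply: leq_trans h HZ.
by rewrite addn0; apply: leq_trans HZ; rewrite -(card_imset _ (@lshift_inj N0 1)); apply: subset_leq_card.
Qed.

Lemma count_le :
  (#|Aset| <= Mcount k.-1 ns (fun i : 'I_m => if (i : nat) == m.-1 then l.-1 else l))%N.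
Proof.
rewrite /Mcount -(card_in_imset (f := phi)).
  apply: subset_leq_card; apply/subsetP => X /imsetP[g gA ->].
  rewrite inE phi_card // eqxx /=; apply/forallP => i.
  have := phi_block g i gA; case: eqP => _; last by rewrite addn0.
  by rewrite addn1 => h; rewrite -ltnS (leq_trans h) // leqSpred.
move=> g1 g2 h1 h2 e; apply: adb_eq.
- by move: h1; rewrite inE => /andP[].
- by move: h2; rewrite inE => /andP[].
move=> x; have := congr1 (fun X : {set 'I_(N0 + 1)} => x \in X) (codom_eq g1 h1).
rewrite /= inE e -(codom_eq g2 h2) inE; exact.
Qed.
End Comb.
Local Open Scope ring_scope.

Section TD.
Variables (n : nat) (R : idomainType).
Implicit Types p q : {mpoly R[n]}.

Lemma tdeg0 : tdeg (0 : {mpoly R[n]}) = 0%N.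
Proof. by rewrite /tdeg msize0. Qed.

Lemma tdegM p q : (tdeg (p * q) <= tdeg p + tdeg q)%N.
Proof.
have [->|p0] := eqVneq p 0; first by rewrite mul0r tdeg0.
have [->|q0] := eqVneq q 0; first by rewrite mulr0 tdeg0.
rewrite /tdeg msizeM //.
move: (msize_poly_eq0 p) (msize_poly_eq0 q).
rewrite (negbTE p0) (negbTE q0).
case: (msize p) => // a; case: (msize q) => // b _ _.
by rewrite addSn /= addnS.
Qed.

Lemma tdegD p q : (tdeg (p + q) <= maxn (tdeg p) (tdeg q))%N.
Proof.
rewrite /tdeg; have := msizeD_le p q.
case: (msize p) => [|a]; case: (msize q) => [|b] /=; case: (msize (p+q)) => [|c] //=;
  rewrite ?max0n ?maxn0 ?maxnSS //= ?ltnS //.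
Qed.

Lemma tdeg_sum_le (I : Type) (r : seq I) (P : pred I) (F : I -> {mpoly R[n]}) W :
  (forall i, P i -> (tdeg (F i) <= W)%N) -> (tdeg (\sum_(i <- r | P i) F i) <= W)%N.
Proof.
move=> H; apply: (big_ind (fun x => (tdeg x <= W)%N)) => //.
  by rewrite tdeg0.
move=> x y hx hy; apply: leq_trans (tdegD x y) _.
by rewrite geq_max hx hy.
Qed.

Lemma tdeg_prod (I : Type) (r : seq I) (P : pred I) (F : I -> {mpoly R[n]}) :
  (tdeg (\prod_(i <- r | P i) F i) <= \sum_(i <- r | P i) tdeg (F i))%N.
Proof.
elim/big_rec2: _ => [|i k p _ le]; first by rewrite /tdeg msize1.
apply: leq_trans (tdegM _ _) _; exact: leq_add.
Qed.

Lemma tdegC c : tdeg (c%:MP : {mpoly R[n]}) = 0%N.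
Proof. by rewrite /tdeg msizeC; case: (c != 0). Qed.

Lemma tdegX i : (tdeg ('X_i : {mpoly R[n]}) <= 1)%N.
Proof. by rewrite /tdeg msizeX mdeg1. Qed.

Lemma tdeg_sign (b : nat) : tdeg ((-1) ^+ b : {mpoly R[n]}) = 0%N.
Proof.
rewrite -signr_odd; case: (odd b); rewrite ?expr1 ?expr0.
  by rewrite -(rmorphN1 (@mpolyC n R)) tdegC.
by rewrite -(rmorph1 (@mpolyC n R)) tdegC.
Qed.

Lemma tdeg_det k (A : 'M[{mpoly R[n]}]_k) (w : 'I_k -> nat) :
  (forall i j, tdeg (A i j) <= w j)%N -> (tdeg (\det A) <= \sum_j w j)%N.
Proof.
move=> H; rewrite /determinant; apply: tdeg_sum_le => s _.
apply: leq_trans (tdegM _ _) _; rewrite tdeg_sign add0n.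
apply: leq_trans; first exact: tdeg_prod.
rewrite [X in (_ <= X)%N](reindex_inj (@perm_inj _ s)) /=.
by apply: leq_sum => i _; apply: H.
Qed.
End TD.
Lemma Gy_entry (F : fieldType) (m l k : nat) (r : 'I_m -> nat)
  (C : forall i : 'I_m, 'M[F]_(k, l)) (D : forall i : 'I_m, 'M[F]_(k, rprime r i))
  (i : 'I_k) (c : 'I_(\sum_(i < m) (l + rprime r i) + 1)) :
  (tdeg (Gy C D i c) <= (\sum_(i < m) (l + rprime r i) <= c)%N)%N.
Proof.
rewrite /Gy; case: (ltnP c (\sum_(i < m) (l + rprime r i))) => hc.
  by rewrite (small_eq _ _ _ c hc) row_mxEl mxE tdegC.
rewrite (big_eq _ _ _ c hc).
have -> : nmax m l r = rshift _ (ord0 : 'I_1) by apply: val_inj; rewrite /= addn0.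
rewrite row_mxEr /newcol summxE; apply: tdeg_sum_le => i' _.
rewrite summxE; apply: tdeg_sum_le => t _; rewrite !mxE.
apply: leq_trans; first exact: tdegM.
by rewrite tdegC addn0 tdegX.
Qed.

Theorem proposition23 (F : finFieldType) (m l k : nat) (r : 'I_m -> nat)
  (C : forall i : 'I_m, 'M[F]_(k, l)) (D : forall i : 'I_m, 'M[F]_(k, rprime r i)) :
  (2 <= m)%N -> (1 <= l)%N -> (forall i, 1 <= r i)%N -> (l <= k)%N -> (k < m * l)%N ->
  is_PMDS l (rprime r) (G0 C D) ->
  forall p : {mpoly F[l]},
    is_lcm (admissible l r)
      (fun f : 'I_k -> 'I_(\sum_(i < m) (l + rprime r i) + 1) =>
         \det (colsub f (Gy C D))) p ->
    (tdeg p <= Mcount k.-1 (fun i => l + rprime r i)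
                 (fun i : 'I_m => if (i : nat) == m.-1 then l.-1 else l))%N.
Proof.
move=> hm2 hl hr hlk hkm _ p [H1 H2].
have hm : (0 < m)%N by apply: leq_trans hm2.
pose P := \prod_(g : {ffun 'I_k -> 'I_(\sum_(i < m) (l + rprime r i) + 1)} | adb m l k r g)
   \det (colsub g (Gy C D)).
have colsubE : forall f : 'I_k -> 'I_(\sum_(i < m) (l + rprime r i) + 1),
    colsub (finfun f) (Gy C D) = colsub f (Gy C D).
  by move=> f; apply/matrixP => i j; rewrite !mxE ffunE.
have adm_adb : forall f, admissible l r f -> adb m l k r (finfun f).
  move=> f [inc blk]; apply/andP; split.
    apply/forallP => a; apply/forallP => b; apply/implyP => hab; rewrite !ffunE; exact: inc.
  apply/forallP => i.
  have -> : [set t | finfun f t \in block (fun j => l + r j)%N i] =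
            [set t | f t \in block (fun j => l + r j)%N i].
    by apply/setP => t; rewrite !inE ffunE.
  exact: blk.
have adb_adm : forall g, adb m l k r g -> admissible l r g.
  move=> g /andP[/forallP inc /forallP blk]; split; last exact: blk.
  by move=> a b hab; move: (inc a) => /forallP /(_ b) /implyP; apply.
have dvdP : forall f, admissible l r f -> mdvd (\det (colsub f (Gy C D))) P.
  move=> f hf; exists (\prod_(g | adb m l k r g && (g != finfun f)) \det (colsub g (Gy C D))).
  by rewrite /P (bigD1 (finfun f) (adm_adb f hf)) /= colsubE mulrC.
have [c Pc] := H2 P dvdP.
have [P0|P0] := eqVneq P 0.
  move/eqP/prodf_eq0: P0 => [g hg /eqP d0].
  have [c' pc'] := H1 _ (adb_adm g hg).
  by rewrite pc' d0 mulr0 tdeg0.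
have tp : (tdeg p <= tdeg P)%N.
  have p0 : p != 0 by apply: contraNneq P0 => e; rewrite Pc e mulr0.
  have c0 : c != 0 by apply: contraNneq P0 => e; rewrite Pc e mul0r.
  rewrite Pc /tdeg msizeM //; move: (msize_poly_eq0 c); rewrite (negbTE c0).
  case: (msize c) => // a _; rewrite addSn /=.
  by case: (msize p) => [|b] //; rewrite addnS /= leq_addl.
apply: leq_trans tp _.
apply: leq_trans; first exact: tdeg_prod.
apply: leq_trans (count_le m l k r hm hr).
rewrite -sum1_card big_mkcond [X in (_ <= X)%N]big_mkcond /=.
apply: leq_sum => g _; rewrite inE; case: ifP => hg //=.
apply: leq_trans.
  apply: (@tdeg_det _ _ _ _ (fun j => (\sum_(i < m) (l + rprime r i) <= g j)%N : nat)).
  by move=> i j; rewrite mxE; apply: Gy_entry.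
case: existsP => [_|hn].
  have -> : (\sum_j ((\sum_(i < m) (l + rprime r i) <= g j)%N : nat) =
      #|[pred j | (\sum_(i < m) (l + rprime r i) <= g j)%N]|)%N.
    rewrite -sum1_card [RHS]big_mkcond /=; apply: eq_bigr => j _.
    by rewrite inE; case: leqP.
  rewrite leqNgt; apply/negP => /card_gt1P [a [b [ha hb]]]; apply/negP; rewrite negbK.
  move: ha hb; rewrite !inE => ha hb; apply/eqP.
  apply: (adb_inj m l k r g hg).
  by rewrite (big_eq _ _ _ _ ha) (big_eq _ _ _ _ hb).
rewrite big1 // => j _; case: leqP => // h.
by case: hn; exists j.
Qed.
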